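(* Let $\mathfrak R$ be an iterated graph system satisfying (GR1)–(GR3), with replacement graphs $G_k$. Let $\theta=[w^{(1)},\dots,w^{(l)}]$ be a path in $G_n$ and fix $v^{(1)}\in W_m$. Then there is at most one path $\hat\theta$ in $G_{n+m}$ of the form $\hat\theta=[w^{(1)}v^{(1)},\dots,w^{(l)}v^{(l)}]$ with $v^{(2)},\dots,v^{(l)}\in W_m$.
   Context: Graphs: $(V,E)$, $V$ finite non-empty, $E\subseteq V\times V$, $(x,y)\in E\Rightarrow(y,x)\notin E$; $\{x,y\}\in E$ means either orientation. A path is a sequence $[x_1,\dots,x_k]$ with $\{x_i,x_{i+1}\}\in E$. An iterated graph system consists of a connected graph $G_1=(S,E)$, a finite set $\mathcal T$ of types, a surjective typing $\mathfrak t:E\to\mathcal T$ and non-empty gluing rules $I_t\subseteq S\times S$. With $W_m=S^m$, $[w]_k=w_1\cdots w_k$ and $wv$ the concatenation of words, the replacement graphs $G_m=(W_m,E_m)$ are defined recursively: $(w,v)\in E_{m+1}$ iff either (1) $[w]_m=[v]_m$ and $(w_{m+1},v_{m+1})\in E$ (type $\mathfrak t(w_{m+1},v_{m+1})$), or (2) $([w]_m,[v]_m)\in E_m$ and $(w_{m+1},v_{m+1})\in I_{\mathfrak t([w]_m,[v]_m)}$ (type $\mathfrak t([w]_m,[v]_m)$). (GR1): for each $t$ and $w\in S$ there is at most one $v$ with $(w,v)\in I_t$ and at most one $v$ with $(v,w)\in I_t$. (GR2): for each $t$ and $w\in S$, $w$ cannot both have some $v$ with $(w,v)\in I_t$ and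 an outgoing edge of $G_1$ of type $t$, nor both have some $v$ with $(v,w)\in I_t$ and an incoming edge of $G_1$ of type $t$. (GR3): the sets of first and second coordinates of $I_t$ are disjoint for each $t$. *)

(* Defs.v *)
From mathcomp Require Import all_boot.
Set Implicit Arguments. Unset Strict Implicit. Unset Printing Implicit Defensive.

Section IGS.
Variables (S T : finType) (E : rel S) (typ : S -> S -> T) (I : T -> rel S).

Definition is_IGS : Prop :=
  [/\ (forall x y, E x y -> ~~ E y x),
      (forall x y, connect (fun a b => E a b || E b a) x y),
      (forall t, exists a b, E a b /\ typ a b = t)
    & (forall t, exists a b, I t a b)].

Definition GR1 : Prop :=
  (forall t w v v', I t w v -> I t w v' -> v = v') /\
  (forall t w v v', I t v w -> I t v' w -> v = v').

Definition GR2 : Prop := forall t w,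
  ~ ((exists v, I t w v) /\ (exists u, E w u /\ typ w u = t)) /\
  ~ ((exists v, I t v w) /\ (exists u, E u w /\ typ u w = t)).

Definition GR3 : Prop := forall t x,
  ~ ((exists y, I t x y) /\ (exists y, I t y x)).

(* gedge k w v = Some t  iff  (w,v) is an edge of the replacement graph G_k
   (words of length k over S) of type t.  Words are seqs; the last letter of a
   word of length m+1 is w_(m+1) and the rest is the prefix [w]_m. *)
Fixpoint gedge (k : nat) (w v : seq S) : option T :=
  match k with
  | 0 => None
  | k'.+1 =>
    if (size w != k) || (size v != k) then None else
    match rev w, rev v with
    | a :: rw, b :: rv =>
      let pw := rev rw in let pv := rev rv in
      if pw == pv then (if E a b then Some (typ a b) else None)
      else match gedge k' pw pv with
           | Some t => if I t a b then Some t else None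
           | None => None
           end
    | _, _ => None
    end
  end.

Definition Gedge (k : nat) (w v : seq S) : bool := gedge k w v != None.

Definition Gadj (k : nat) (w v : seq S) : bool := Gedge k w v || Gedge k v w.

Definition Gpath (k : nat) (p : seq (seq S)) : bool :=
  all (fun w => size w == k) p && sorted (Gadj k) p.

End IGS.

(* Main.v *)
Require Import Defs.
From mathcomp Require Import all_boot.
Set Implicit Arguments. Unset Strict Implicit.

Section Aux.
Variables (S T : finType) (E : rel S) (typ : S -> S -> T) (I : T -> rel S).
Hypothesis Easym : forall x y, E x y -> ~~ E y x.

Lemma gedge_asym k w v : gedge E typ I k w v != None -> gedge E typ I k v w = None.
Proof.
elim: k w v => [//|k IH] w v /=.
case: ifP => // _; rewrite orbC; case: ifP => // _.
case: (rev w) => [//|a rw]; case: (rev v) => [//|b rv].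
rewrite [rev rv == _]eq_sym; case: ifP => _.
  case Eab: (E a b) => //= _; have := Easym Eab; by case: (E b a).
case H: (gedge E typ I k (rev rw) (rev rv)) => [t|//] _.
by rewrite (IH (rev rw) (rev rv)) ?H.
Qed.

Lemma gedge_refl k w : gedge E typ I k w w = None.
Proof.
case: (boolP (gedge E typ I k w w != None)) => [H|]; last by move/negPn/eqP.
by have H' := @gedge_asym k w w H; move: H; rewrite H'.
Qed.

Lemma gedge_cat k w w' v v' t : size w = k -> size w' = k -> w != w' ->
  size v = size v' ->
  gedge E typ I (k + size v) (w ++ v) (w' ++ v') = Some t ->
  gedge E typ I k w w' = Some t /\ all2 (I t) v v'.
Proof.
move=> sw sw' ww'.
elim/last_ind: v v' t => [|v a IH] v' t.
  by case: v' => // _; rewrite !cats0 addn0.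
case/lastP: v' => [|v' b]; first by rewrite size_rcons.
rewrite !size_rcons => /eqP; rewrite eqSS => /eqP svv.
rewrite addnS /= -!rcons_cat !rev_rcons !revK !size_rcons !size_cat sw sw' svv eqxx /=.
have -> : (w ++ v == w' ++ v') = false.
  by rewrite eqseq_cat ?sw ?sw' // (negbTE ww').
rewrite -svv; case H: (gedge E typ I (k + size v) (w ++ v) (w' ++ v')) => [t0|//].
case: ifP => // Iab [<-]; have [-> Hall] := IH v' t0 svv H; split => //.
have sv: size v = size v' by [].
elim: v v' sv Hall {H IH svv} => [|x v IHv] [|y v'] //=.
  by move=> _ _; rewrite Iab.
by move=> [] /IHv H /andP [-> /H].
Qed.

Hypothesis gr1 : GR1 I.

Lemma all2_uniq t v u u' : all2 (I t) v u -> all2 (I t) v u' -> u = u'.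
Proof.
elim: v u u' => [|x v IH] [|y u] [|y' u'] //= /andP [H1 H2] /andP [H3 H4].
by rewrite (gr1.1 _ _ _ _ H1 H3) (IH _ _ H2 H4).
Qed.

Lemma adj_unique n m w w' v u u' : size w = n -> size w' = n ->
  Gadj E typ I n w w' -> size v = m -> size u = m -> size u' = m ->
  Gadj E typ I (n + m) (w ++ v) (w' ++ u) ->
  Gadj E typ I (n + m) (w ++ v) (w' ++ u') -> u = u'.
Proof.
move=> sw sw' Hadj sv su su'.
have ww' : w != w'.
  apply/eqP => e; move: Hadj; rewrite e /Gadj /Gedge gedge_refl; by rewrite eqxx.
have w'w : w' != w by rewrite eq_sym.
rewrite /Gadj /Gedge => /orP [] H1 /orP [] H2.
- move: H1 H2; case e1: (gedge _ _ _ _ (w ++ v) (w' ++ u)) => [t1|//] _.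
  case e2: (gedge _ _ _ _ (w ++ v) (w' ++ u')) => [t2|//] _.
  move: e1 e2; rewrite -sv => e1 e2.
  have [g1 a1] := gedge_cat sw sw' ww' (etrans sv (esym su)) e1.
  have [g2 a2] := gedge_cat sw sw' ww' (etrans sv (esym su')) e2.
  move: g1; rewrite g2 => -[e]; subst t2; exact: all2_uniq a1 a2.
- move: H1 H2; case e1: (gedge _ _ _ _ (w ++ v) (w' ++ u)) => [t1|//] _.
  case e2: (gedge _ _ _ _ (w' ++ u') (w ++ v)) => [t2|//] _.
  rewrite -sv in e1; rewrite -su' in e2.
  have [g1 _] := gedge_cat sw sw' ww' (etrans sv (esym su)) e1.
  have [g2 _] := gedge_cat sw' sw w'w (etrans su' (esym sv)) e2.
  by have := @gedge_asym n w w'; rewrite g1 g2 => /(_ isT).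
- move: H1 H2; case e1: (gedge _ _ _ _ (w' ++ u) (w ++ v)) => [t1|//] _.
  case e2: (gedge _ _ _ _ (w ++ v) (w' ++ u')) => [t2|//] _.
  rewrite -su in e1; rewrite -sv in e2.
  have [g1 _] := gedge_cat sw' sw w'w (etrans su (esym sv)) e1.
  have [g2 _] := gedge_cat sw sw' ww' (etrans sv (esym su')) e2.
  by have := @gedge_asym n w w'; rewrite g1 g2 => /(_ isT).
- move: H1 H2; case e1: (gedge _ _ _ _ (w' ++ u) (w ++ v)) => [t1|//] _.
  case e2: (gedge _ _ _ _ (w' ++ u') (w ++ v)) => [t2|//] _.
  rewrite -su in e1; rewrite -su' in e2.
  have [g1 a1] := gedge_cat sw' sw w'w (etrans su (esym sv)) e1.
  have [g2 a2] := gedge_cat sw' sw w'w (etrans su' (esym sv)) e2.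
  move: g1; rewrite g2 => -[e]; subst t2.
  elim: v u u' a1 a2 {e1 e2 sv su su' g2} => [|x v IH] [|y u] [|y' u'] //= /andP [H1 H2] /andP [H3 H4].
  by rewrite (gr1.2 _ _ _ _ H1 H3) (IH _ _ H2 H4).
Qed.
End Aux.

Theorem proposition5p4 (S T : finType) (E : rel S) (typ : S -> S -> T)
    (I : T -> rel S) :
  is_IGS E typ I -> GR1 I -> GR2 E typ I -> GR3 I ->
  forall (n m : nat), 0 < n -> 0 < m ->
  forall (theta : seq (seq S)), theta != [::] -> Gpath E typ I n theta ->
  forall (v1 : seq S), size v1 = m ->
  forall (vs vs' : seq (seq S)),
    size vs = (size theta).-1 -> all (fun v => size v == m) vs ->
    size vs' = (size theta).-1 -> all (fun v => size v == m) vs' ->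
    Gpath E typ I (n + m) [seq x.1 ++ x.2 | x <- zip theta (v1 :: vs)] ->
    Gpath E typ I (n + m) [seq x.1 ++ x.2 | x <- zip theta (v1 :: vs')] ->
    vs = vs'.
Proof.
move=> [Easym _ _ _] gr1 _ _ n m _ _ theta _.
elim: theta => [|w theta IH] //= Hp v1 sv1 vs vs'; first by case: vs => //; case: vs'.
case: theta IH Hp => [|w' theta] IH Hp.
  by case: vs => //; case: vs'.
case: vs => [//|u us]; case: vs' => [//|u' us'] /= [sus] /andP [/eqP su aus] [sus'] /andP [/eqP su' aus'].
rewrite /Gpath /= => /andP [/andP [_ /andP [_ all1]] /andP [adj1 srt1]].
move=> /andP [/andP [_ /andP [_ all2']] /andP [adj2 srt2]].
move: Hp; rewrite /Gpath /= => /andP [/andP [/eqP sw /andP [/eqP sw' allt]] /andP [adj srt]].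
have e := adj_unique Easym gr1 sw sw' adj sv1 su su' adj1 adj2.
subst u'; congr (_ :: _).
apply: (IH _ u su us us') => //.
- by rewrite /Gpath /= sw' eqxx allt.
- by rewrite /Gpath /= size_cat sw' su eqxx all1 srt1.
- by rewrite /Gpath /= size_cat sw' su eqxx all2' srt2.
Qed.
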